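(* Let $(\mathcal S,\mu)$ be a probability space and $a,b\ge0$. For all $W_1,W_2\in\mathcal W$, $$\|W_1^{(a,b)}-W_2^{(a,b)}\|_\square\le7\|W_1-W_2\|_\square.$$ Moreover, for every $W\in\mathcal W$, if $a>0$ then $\sup_x\lambda_{W^{(a,b)}}(x)\le e^{-1}/a$, and if $b>0$ then $\sup_y\lambda'_{W^{(a,b)}}(y)\le e^{-1}/b$.
   Context: $\mathcal W$ is the set of integrable measurable $W:\mathcal S^2\to[0,\infty)$ (not necessarily symmetric). Marginals: $\lambda_W(x)=\int W(x,y)\,d\mu(y)$ and $\lambda'_W(y)=\int W(x,y)\,d\mu(x)$ (values in $[0,\infty]$). For $a,b\ge0$, $W^{(a,b)}(x,y)=e^{-a\lambda_W(x)}W(x,y)e^{-b\lambda'_W(y)}$. Cut norm: $\|W\|_\square=\sup_{\|f\|_\infty,\|g\|_\infty\le1}|\int f(x)g(y)W(x,y)\,d\mu(x)d\mu(y)|$. *)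

(* Defs.v *)
From HB Require Import structures.
From mathcomp Require Import all_boot all_order all_algebra.
From mathcomp Require Import all_classical all_reals all_analysis.
Set Implicit Arguments. Unset Strict Implicit. Unset Printing Implicit Defensive.
Import Order.TTheory GRing.Theory Num.Theory.
Local Open Scope classical_set_scope.
Local Open Scope ring_scope.
Local Open Scope ereal_scope.

Section Kernels.
Context {R : realType} {d : measure_display} {T : measurableType d}.
Variable mu : {measure set T -> \bar R}.

Definition inWclass (W : T * T -> R) : Prop :=
  (forall z, (0 <= W z)%R) /\ (mu \x mu).-integrable setT (fun z => (W z)%:E).

Definition lam (W : T * T -> R) (x : T) : \bar R := \int[mu]_y (W (x, y))%:E.
Definition lam' (W : T * T -> R) (y : T) : \bar R := \int[mu]_x (W (x, y))%:E.

(* e^{-a l} for l in [0, +oo], with the convention 0 * oo = 0 *)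
Definition expfac (a : R) (l : \bar R) : R :=
  match l with
  | r%:E => expR (- (a * r))
  | +oo => if a == 0%R then 1%R else 0%R
  | -oo => 1%R
  end.

Definition Wab (a b : R) (W : T * T -> R) : T * T -> R :=
  fun z => (expfac a (lam W z.1) * W z * expfac b (lam' W z.2))%R.

Definition cutnorm (W : T * T -> R) : \bar R :=
  ereal_sup [set e | exists f g : T -> R,
    [/\ measurable_fun setT f, measurable_fun setT g,
        (forall x, `|f x| <= 1)%R, (forall y, `|g y| <= 1)%R &
        e = `| \int[mu \x mu]_z ((f z.1 * g z.2 * W z)%R)%:E |] ].

End Kernels.

(* Main.v *)
Require Import Defs.
From HB Require Import structures.
From mathcomp Require Import all_boot all_order all_algebra.
From mathcomp Require Import all_classical all_reals all_analysis.
From mathcomp Require Import measurable_realfun ring lra.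
Import Order.TTheory GRing.Theory Num.Theory.
Set Implicit Arguments. Unset Strict Implicit. Unset Printing Implicit Defensive.
Local Open Scope classical_set_scope.
Local Open Scope ring_scope.

Section Pf.
Context {R : realType} {d : measure_display} {T : measurableType d}.
Variable mu : probability T R.
Local Open Scope ereal_scope.
Local Notation P := (mu \x mu).

Lemma inW_meas W : inWclass mu W -> measurable_fun setT W.
Proof. by move=> [_ /measurable_int/measurable_EFinP]. Qed.

Lemma lam_ge0 W : inWclass mu W -> forall x, 0 <= lam mu W x.
Proof. by move=> [W0 _] x; apply: integral_ge0 => y _; rewrite lee_fin. Qed.

Lemma lam'_ge0 W : inWclass mu W -> forall x, 0 <= lam' mu W x.
Proof. by move=> [W0 _] x; apply: integral_ge0 => y _; rewrite lee_fin. Qed.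

Lemma lam_meas W : inWclass mu W -> measurable_fun setT (lam mu W).
Proof.
move=> hW; apply: (measurable_fun_fubini_tonelli_F (EFin \o W)) => //.
  by apply/measurable_EFinP; exact: inW_meas.
by move=> z; rewrite lee_fin; case: hW.
Qed.

Lemma lam'_meas W : inWclass mu W -> measurable_fun setT (lam' mu W).
Proof.
move=> hW; apply: (measurable_fun_fubini_tonelli_G (EFin \o W)) => //.
  by apply/measurable_EFinP; exact: inW_meas.
by move=> z; rewrite lee_fin; case: hW.
Qed.

Lemma expfac_ge0 (a : R) (l : \bar R) : (0 <= expfac a l)%R.
Proof. by case: l => [r||] /=; [exact: expR_ge0| case: ifP|]. Qed.

Lemma expfac_le1 (a : R) (l : \bar R) : (0 <= a)%R -> 0 <= l -> (expfac a l <= 1)%R.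
Proof.
move=> a0; case: l => [r||] //= r0.
  by rewrite expR_le1 oppr_le0 mulr_ge0.
by case: ifP.
Qed.

Lemma expfacE (a : R) (l : \bar R) : expfac a l =
  if l == +oo then expfac a +oo else expR (- (a * fine l)).
Proof. by case: l => [r||] //=; rewrite mulr0 oppr0 expR0. Qed.

Lemma expfac_meas (a : R) (h : T -> \bar R) : measurable_fun setT h ->
  measurable_fun setT (fun x => expfac a (h x)).
Proof.
move=> mh; rewrite (_ : (fun x => _) = fun x =>
  if h x == +oo then expfac a +oo else expR (- (a * fine (h x)))); last first.
  by apply/funext => x; rewrite expfacE.
apply: measurable_fun_ifT => //.
- apply: (measurable_fun_bool true); rewrite setTI.
  rewrite (_ : _ @^-1` _ = h @^-1` [set +oo]); last first.
    by apply/seteqP; split => x /= /eqP.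
  by rewrite -[X in measurable X]setTI; apply: mh => //; exact: emeasurable_set1.
- apply: measurableT_comp; first exact: measurable_expR.
  apply: measurableT_comp => //; apply: measurableT_comp => //.
  exact: measurableT_comp (fine_measurable _) mh.
Qed.


Lemma xexp_le (a r : R) : (0 < a)%R -> (expR (- (a * r)) * r <= expR (-1) / a)%R.
Proof.
move=> a0; rewrite ler_pdivlMr // -mulrA.
have h : (a * r <= expR (a * r - 1))%R.
  by have := expR_ge1Dx (a * r - 1); rewrite addrC subrK.
rewrite (mulrC r) (le_trans (ler_wpM2l (expR_ge0 _) h))//.
by rewrite -expRD addrA addNr add0r.
Qed.

Lemma part2a W (a b : R) : inWclass mu W -> (0 < a)%R -> (0 <= b)%R -> forall x,
  lam mu (Wab mu a b W) x <= (expR (-1) / a)%:E.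
Proof.
move=> hW a0 b0 x; have [W0 iW] := hW.
have mW := inW_meas hW.
rewrite /lam /Wab /=.
apply: (@le_trans _ _ (\int[mu]_y ((expfac a (lam mu W x))%:E * (W (x, y))%:E))).
  apply: ge0_le_integral => //.
  - by move=> y _; rewrite lee_fin mulr_ge0 ?mulr_ge0 ?expfac_ge0.
  - apply/measurable_EFinP; apply: measurable_funM; first apply: measurable_funM.
    + exact: measurable_cst.
    + exact: measurable_fun_pair2.
    + exact/expfac_meas/lam'_meas.
  - apply: measurable_funeM; apply/measurable_EFinP; exact: measurable_fun_pair2.
  - move=> y _; rewrite -EFinM lee_fin ler_piMr ?mulr_ge0 ?expfac_ge0//.
    exact/expfac_le1/lam'_ge0.
rewrite ge0_integralZl_EFin //; last 3 first.
- by move=> y _; rewrite lee_fin.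
- apply/measurable_EFinP; exact: measurable_fun_pair2.
- exact: expfac_ge0.
rewrite -/(lam mu W x); have := lam_ge0 hW x.
case: (lam mu W x) => [r||] //= r0.
  by rewrite -EFinM lee_fin xexp_le.
by rewrite gt_eqF // mul0e lee_fin divr_ge0 ?expR_ge0 ?ltW.
Qed.

Lemma part2b W (a b : R) : inWclass mu W -> (0 <= a)%R -> (0 < b)%R -> forall y,
  lam' mu (Wab mu a b W) y <= (expR (-1) / b)%:E.
Proof.
move=> hW a0 b0 y; have [W0 iW] := hW.
have mW := inW_meas hW.
rewrite /lam' /Wab /=.
apply: (@le_trans _ _ (\int[mu]_x ((expfac b (lam' mu W y))%:E * (W (x, y))%:E))).
  apply: ge0_le_integral => //.
  - by move=> x _; rewrite lee_fin mulr_ge0 ?mulr_ge0 ?expfac_ge0.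
  - apply/measurable_EFinP; apply: measurable_funM; first apply: measurable_funM.
    + exact/expfac_meas/lam_meas.
    + exact: measurable_fun_pair1.
    + exact: measurable_cst.
  - apply: measurable_funeM; apply/measurable_EFinP; exact: measurable_fun_pair1.
  - move=> x _; rewrite -EFinM lee_fin (mulrC (expfac b _)) -mulrA ler_piMl ?mulr_ge0 ?expfac_ge0//.
    exact/expfac_le1/lam_ge0.
rewrite ge0_integralZl_EFin //; last 3 first.
- by move=> x _; rewrite lee_fin.
- apply/measurable_EFinP; exact: measurable_fun_pair1.
- exact: expfac_ge0.
rewrite -/(lam' mu W y); have := lam'_ge0 hW y.
case: (lam' mu W y) => [r||] //= r0.
  by rewrite -EFinM lee_fin xexp_le.
by rewrite gt_eqF // mul0e lee_fin divr_ge0 ?expR_ge0 ?ltW.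
Qed.


Lemma mfst (u : T -> R) : measurable_fun setT u ->
  measurable_fun setT (fun z : T * T => u z.1).
Proof. by move=> mu_; apply: measurableT_comp mu_ _; exact: measurable_fst. Qed.

Lemma msnd (u : T -> R) : measurable_fun setT u ->
  measurable_fun setT (fun z : T * T => u z.2).
Proof. by move=> mu_; apply: measurableT_comp mu_ _; exact: measurable_snd. Qed.

Lemma cut_ub (u v : T -> R) (W : T * T -> R) :
  measurable_fun setT u -> measurable_fun setT v ->
  (forall x, `|u x| <= 1)%R -> (forall y, `|v y| <= 1)%R ->
  `| \int[P]_z ((u z.1 * v z.2 * W z)%R)%:E | <= cutnorm mu W.
Proof. by move=> mu_ mv hu hv; apply: ereal_sup_ubound; exists u, v; split. Qed.

Lemma intW W : inWclass mu W -> P.-integrable setT (EFin \o W).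
Proof. by case. Qed.

Lemma intB W1 W2 : inWclass mu W1 -> inWclass mu W2 ->
  P.-integrable setT (EFin \o (fun z => W1 z - W2 z)%R).
Proof.
move=> [_ i1] [_ i2]; apply: eq_integrable (integrableB _ i1 i2) => //.
Qed.

Lemma int_bdd (m g : T * T -> R) : measurable_fun setT m ->
  (forall z, `|m z| <= 1)%R -> P.-integrable setT (EFin \o g) ->
  P.-integrable setT (fun z => (m z * g z)%:E).
Proof.
move=> mm hm ig; have mg := measurable_int _ ig; apply: le_integrable ig => //.
  apply/measurable_EFinP; apply: measurable_funM => //.
  exact/measurable_EFinP.
by move=> z _; rewrite /comp !abse_EFin lee_fin normrM ler_piMl.
Qed.

Lemma bnd1 (x y : R) : (`|x| <= 1 -> `|y| <= 1 -> `|x * y| <= 1)%R.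
Proof. by move=> hx hy; rewrite normrM mulr_ile1. Qed.

Lemma expfac_bnd (a : R) (l : \bar R) : (0 <= a)%R -> 0 <= l -> (`|expfac a l| <= 1)%R.
Proof. by move=> a0 l0; rewrite ger0_norm ?expfac_ge0 ?expfac_le1. Qed.

Lemma expfac_bndB (a : R) (l1 l2 : \bar R) : (0 <= a)%R -> 0 <= l1 -> 0 <= l2 ->
  (`|expfac a l1 - expfac a l2| <= 1)%R.
Proof.
move=> a0 l10 l20; have h1 := expfac_ge0 a l1; have h2 := expfac_ge0 a l2.
have h1' := expfac_le1 a0 l10; have h2' := expfac_le1 a0 l20.
rewrite ler_norml; apply/andP; split; lra.
Qed.

Lemma fineW_meas W : inWclass mu W -> measurable_fun setT (fun x => fine (lam mu W x)).
Proof. by move=> h; apply: measurableT_comp (lam_meas h); exact: fine_measurable. Qed.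

Lemma fineW'_meas W : inWclass mu W -> measurable_fun setT (fun x => fine (lam' mu W x)).
Proof. by move=> h; apply: measurableT_comp (lam'_meas h); exact: fine_measurable. Qed.

Lemma sign_meas (r1 r2 : T -> R) : measurable_fun setT r1 -> measurable_fun setT r2 ->
  measurable_fun setT (fun x => (if r2 x < r1 x then 1 else -1 : R)%R).
Proof.
move=> m1 m2; apply: measurable_fun_ifT => //.
apply: (measurable_fun_bool true).
rewrite (_ : _ `&` _ = setT `&` [set x | (r2 x)%:E < (r1 x)%:E]).
  by apply: measurable_lte => //; exact/measurable_EFinP.
by apply/seteqP; split => x [_ /= h]; split => //; rewrite ?lte_fin in h *.
Qed.


Lemma sign_abs (x y : R) : (`|x - y| = (if y < x then 1 else -1) * (x - y))%R.
Proof.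
case: ltP => h; first by rewrite mul1r ger0_norm // subr_ge0 ltW.
by rewrite mulN1r ler0_norm // subr_le0.
Qed.

Lemma K1 W1 W2 : inWclass mu W1 -> inWclass mu W2 ->
  \int[mu]_x (`|fine (lam mu W1 x) - fine (lam mu W2 x)|)%:E
    <= cutnorm mu (fun z => W1 z - W2 z)%R.
Proof.
move=> h1 h2.
pose r1 x := fine (lam mu W1 x). pose r2 x := fine (lam mu W2 x).
pose s x := (if r2 x < r1 x then 1 else -1 : R)%R.
have ms : measurable_fun setT s by apply: sign_meas; exact: fineW_meas.
have hs : forall x, (`|s x| <= 1)%R by move=> x; rewrite /s; case: ifP; rewrite ?normrN normr1.
pose F z := ((s z.1 * (fun _ : T => 1%R) z.2 * (W1 z - W2 z))%R)%:E.
have iF : P.-integrable setT F.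
  apply: (int_bdd (m := fun z => s z.1 * 1)%R) (intB h1 h2).
  - by apply: measurable_funM; [exact: mfst|exact: measurable_cst].
  - by move=> z; rewrite mulr1.
have -> : \int[mu]_x (`|fine (lam mu W1 x) - fine (lam mu W2 x)|)%:E =
          \int[mu]_x ((s x * (r1 x - r2 x))%R)%:E.
  by apply: eq_integral => x _; rewrite sign_abs.
rewrite (ae_eq_integral (fun x => \int[mu]_y F (x, y))) //.
- rewrite (integral12_prod_meas1 iF).
  apply: le_trans (lee_abs _) _.
  apply: (cut_ub (v := fun _ : T => 1%R)) => //; try exact: measurable_cst; by move=> _; rewrite normr1.
- apply/measurable_EFinP; apply: measurable_funM => //.
  by apply: measurable_funB; exact: fineW_meas.
- exact: (measurable_fubini_F iF).
- have [_ i1] := h1; have [_ i2] := h2.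
  apply: filterS2 (ae_integrable1 i1) (ae_integrable1 i2) => x ix1 ix2 _.
  transitivity (\int[mu]_y ((s x)%:E * ((W1 (x, y))%:E - (W2 (x, y))%:E))); last first.
    by apply: eq_integral => y _; rewrite /F /= mulr1 EFinM EFinB.
  rewrite integralZl //; last exact: integrableB.
  rewrite (integralB _ ix1 ix2) //.
  rewrite -/(lam mu W1 x) -/(lam mu W2 x).
  have f1 : lam mu W1 x \is a fin_num := integrable_fin_num measurableT ix1.
  have f2 : lam mu W2 x \is a fin_num := integrable_fin_num measurableT ix2.
  by rewrite -(fineK f1) -(fineK f2) -EFinB -EFinM.
Qed.


Lemma K2 W1 W2 : inWclass mu W1 -> inWclass mu W2 ->
  \int[mu]_y (`|fine (lam' mu W1 y) - fine (lam' mu W2 y)|)%:E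
    <= cutnorm mu (fun z => W1 z - W2 z)%R.
Proof.
move=> h1 h2.
pose r1 x := fine (lam' mu W1 x). pose r2 x := fine (lam' mu W2 x).
pose s x := (if r2 x < r1 x then 1 else -1 : R)%R.
have ms : measurable_fun setT s by apply: sign_meas; exact: fineW'_meas.
have hs : forall x, (`|s x| <= 1)%R by move=> x; rewrite /s; case: ifP; rewrite ?normrN normr1.
pose F z := (((fun _ : T => 1%R) z.1 * s z.2 * (W1 z - W2 z))%R)%:E.
have iF : P.-integrable setT F.
  apply: (int_bdd (m := fun z => 1 * s z.2)%R) (intB h1 h2).
  - by apply: measurable_funM; [exact: measurable_cst|exact: msnd].
  - by move=> z; rewrite mul1r.
have -> : \int[mu]_x (`|fine (lam' mu W1 x) - fine (lam' mu W2 x)|)%:E =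
          \int[mu]_x ((s x * (r1 x - r2 x))%R)%:E.
  by apply: eq_integral => x _; rewrite sign_abs.
rewrite (ae_eq_integral (fun y => \int[mu]_x F (x, y))) //.
- rewrite (integral21_prod_meas1 iF).
  apply: le_trans (lee_abs _) _.
  apply: (cut_ub (u := fun _ : T => 1%R)) => //; try exact: measurable_cst; by move=> _; rewrite normr1.
- apply/measurable_EFinP; apply: measurable_funM => //.
  by apply: measurable_funB; exact: fineW'_meas.
- exact: (measurable_fubini_G iF).
- have [_ i1] := h1; have [_ i2] := h2.
  apply: filterS2 (ae_integrable2 i1) (ae_integrable2 i2) => y iy1 iy2 _.
  transitivity (\int[mu]_x ((s y)%:E * ((W1 (x, y))%:E - (W2 (x, y))%:E))); last first.
    by apply: eq_integral => x _; rewrite /F /= mul1r EFinM EFinB.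
  rewrite integralZl //; last exact: integrableB.
  rewrite (integralB _ iy1 iy2) //.
  rewrite -/(lam' mu W1 y) -/(lam' mu W2 y).
  have f1 : lam' mu W1 y \is a fin_num := integrable_fin_num measurableT iy1.
  have f2 : lam' mu W2 y \is a fin_num := integrable_fin_num measurableT iy2.
  by rewrite -(fineK f1) -(fineK f2) -EFinB -EFinM.
Qed.

Local Open Scope ring_scope.
Lemma texp (t : R) : expR (- t) * t <= expR (-1).
Proof.
have h : t <= expR (t - 1) by have := expR_ge1Dx (t - 1); rewrite addrC subrK.
have -> : expR (-1) = expR (- t) * expR (t - 1) :> R.
  by rewrite -expRD addrA addNr add0r.
by rewrite ler_wpM2l ?expR_ge0.
Qed.

Lemma one_sub_exp (u : R) : 1 - expR (- u) <= u.
Proof. by have := expR_ge1Dx (- u); lra. Qed.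

Lemma key_ineq (a r1 r2 : R) : 0 <= a -> 0 <= r1 -> 0 <= r2 ->
  `|expR (- (a * r1)) - expR (- (a * r2))| * r1 <= (1 + expR (-1)) * `|r1 - r2|.
Proof.
move=> a0 r10 r20.
have E0 := expR_ge0 (-1 : R).
case: (leP r1 r2) => h.
- pose dl := r2 - r1.
  have e2 : expR (- (a * r2)) = expR (- (a * r1)) * expR (- (a * dl)).
    by rewrite -expRD; congr expR; rewrite /dl; ring.
  have o := one_sub_exp (a * dl).
  have t := texp (a * r1).
  have q1 : expR (- (a * dl)) <= 1 by rewrite expR_le1 oppr_le0 mulr_ge0 // subr_ge0.
  have e1 := expR_ge0 (- (a * r1)).
  rewrite e2 (distrC r1 r2) (ger0_norm (x := r2 - r1)) ?subr_ge0 // -/dl.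
  rewrite -{1}(mulr1 (expR (- (a * r1)))) -mulrBr ger0_norm ?mulr_ge0 ?subr_ge0 //.
  have dl0 : 0 <= dl by rewrite subr_ge0.
  have h1 : expR (- (a * r1)) * (1 - expR (- (a * dl))) * r1 <= expR (- (a * r1)) * (a * dl) * r1.
    by rewrite ler_wpM2r // ler_wpM2l.
  have h2 : expR (- (a * r1)) * (a * r1) * dl <= expR (-1) * dl by rewrite ler_wpM2r.
  nra.
- pose dl := r1 - r2.
  have e1 : expR (- (a * r1)) = expR (- (a * r2)) * expR (- (a * dl)).
    by rewrite -expRD; congr expR; rewrite /dl; ring.
  have o := one_sub_exp (a * dl).
  have t := texp (a * r2).
  have dl0 : 0 <= dl by rewrite subr_ge0 ltW.
  have q1 : expR (- (a * dl)) <= 1 by rewrite expR_le1 oppr_le0 mulr_ge0.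
  have q0 := expR_ge0 (- (a * dl)).
  have e2 := expR_ge0 (- (a * r2)).
  have e21 : expR (- (a * r2)) <= 1 by rewrite expR_le1 oppr_le0 mulr_ge0.
  rewrite e1 (ger0_norm (x := r1 - r2) dl0) -/dl.
  rewrite (distrC _ (expR (- (a * r2)))) -{1}(mulr1 (expR (- (a * r2)))) -mulrBr normrM (ger0_norm e2) (ger0_norm (x := 1 - _)) ?subr_ge0 //.
  have -> : r1 = r2 + dl by rewrite /dl; ring.
  have h1 : expR (- (a * r2)) * (1 - expR (- (a * dl))) * r2 <= expR (- (a * r2)) * (a * dl) * r2.
    by rewrite ler_wpM2r // ler_wpM2l.
  have h2 : expR (- (a * r2)) * (a * r2) * dl <= expR (-1) * dl by rewrite ler_wpM2r.
  have h3 : expR (- (a * r2)) * (1 - expR (- (a * dl))) * dl <= dl.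
    rewrite ler_piMl //.
    by rewrite mulr_ile1 // ?subr_ge0 // lerBlDr lerDl.
    idtac.
  nra.
Qed.
Local Open Scope ereal_scope.

Lemma lam_fin_ae W : inWclass mu W -> {ae mu, forall x, lam mu W x \is a fin_num}.
Proof.
move=> [_ iW]; apply: filterS (ae_integrable1 iW) => x ix.
by have := integrable_fin_num measurableT ix.
Qed.

Lemma lam'_fin_ae W : inWclass mu W -> {ae mu, forall y, lam' mu W y \is a fin_num}.
Proof.
move=> [_ iW]; apply: filterS (ae_integrable2 iW) => x ix.
by have := integrable_fin_num measurableT ix.
Qed.

Lemma LA W1 W2 (a : R) : (0 <= a)%R -> inWclass mu W1 -> inWclass mu W2 ->
  \int[P]_z ((`|expfac a (lam mu W1 z.1) - expfac a (lam mu W2 z.1)| * W1 z)%R)%:E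
   <= (1 + expR (-1))%:E * \int[mu]_x (`|fine (lam mu W1 x) - fine (lam mu W2 x)|)%:E.
Proof.
move=> a0 h1 h2.
pose dh x := (`|expfac a (lam mu W1 x) - expfac a (lam mu W2 x)|)%R.
have mdh : measurable_fun setT dh.
  apply: measurableT_comp; first exact: normr_measurable.
  by apply: measurable_funB; apply: expfac_meas; exact: lam_meas.
have [W10 _] := h1.
have mW1 := inW_meas h1.
have mF : measurable_fun setT (fun z : T * T => ((dh z.1 * W1 z)%R)%:E).
  by apply/measurable_EFinP; apply: measurable_funM => //; exact: mfst.
have F0 : forall z : T * T, 0 <= ((dh z.1 * W1 z)%R)%:E.
  by move=> z; rewrite lee_fin mulr_ge0 // /dh normr_ge0.
rewrite (fubini_tonelli1 _ mF F0) /fubini_F.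
have -> : \int[mu]_x \int[mu]_y ((dh (x, y).1 * W1 (x, y))%R)%:E =
          \int[mu]_x ((dh x)%:E * lam mu W1 x).
  apply: eq_integral => x _ /=.
  under eq_integral do rewrite EFinM.
  rewrite ge0_integralZl_EFin //; last exact: normr_ge0.
  - by move=> y _; rewrite lee_fin.
  - by apply/measurable_EFinP; exact: measurable_fun_pair2.
have mG : measurable_fun setT (fun x => (`|fine (lam mu W1 x) - fine (lam mu W2 x)|)%:E).
  apply/measurable_EFinP; apply: measurableT_comp; first exact: normr_measurable.
  by apply: measurable_funB; exact: fineW_meas.
have -> : (1 + expR (-1))%:E * \int[mu]_x (`|fine (lam mu W1 x) - fine (lam mu W2 x)|)%:E
   = \int[mu]_x ((1 + expR (-1))%:E * (`|fine (lam mu W1 x) - fine (lam mu W2 x)|)%:E).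
  rewrite ge0_integralZl_EFin //.
apply: ae_ge0_le_integral => //.
- by move=> x _; apply: mule_ge0; [rewrite lee_fin /dh normr_ge0|exact: lam_ge0].
- apply: emeasurable_funM; last exact: lam_meas.
  exact/measurable_EFinP.
- by apply: measurable_funeM.
- apply: filterS2 (lam_fin_ae h1) (lam_fin_ae h2) => x f1 f2 _.
  rewrite /dh; move: f1 f2 (lam_ge0 h1 x) (lam_ge0 h2 x).
  case: (lam mu W1 x) => [r1||] //; case: (lam mu W2 x) => [r2||] //= _ _ r10 r20.
  rewrite -EFinM lee_fin; rewrite ?lee_fin in r10 r20.
  exact: key_ineq.
Qed.

Lemma LC W1 W2 (b : R) : (0 <= b)%R -> inWclass mu W1 -> inWclass mu W2 ->
  \int[P]_z ((`|expfac b (lam' mu W1 z.2) - expfac b (lam' mu W2 z.2)| * W1 z)%R)%:E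
   <= (1 + expR (-1))%:E * \int[mu]_x (`|fine (lam' mu W1 x) - fine (lam' mu W2 x)|)%:E.
Proof.
move=> b0 h1 h2.
pose dh x := (`|expfac b (lam' mu W1 x) - expfac b (lam' mu W2 x)|)%R.
have mdh : measurable_fun setT dh.
  apply: measurableT_comp; first exact: normr_measurable.
  by apply: measurable_funB; apply: expfac_meas; exact: lam'_meas.
have [W10 _] := h1.
have mW1 := inW_meas h1.
have mF : measurable_fun setT (fun z : T * T => ((dh z.2 * W1 z)%R)%:E).
  by apply/measurable_EFinP; apply: measurable_funM => //; exact: msnd.
have F0 : forall z : T * T, 0 <= ((dh z.2 * W1 z)%R)%:E.
  by move=> z; rewrite lee_fin mulr_ge0 // /dh normr_ge0.
rewrite (fubini_tonelli2 _ mF F0) /fubini_G.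
have -> : \int[mu]_y \int[mu]_x ((dh (x, y).2 * W1 (x, y))%R)%:E =
          \int[mu]_y ((dh y)%:E * lam' mu W1 y).
  apply: eq_integral => y _ /=.
  under eq_integral do rewrite EFinM.
  rewrite ge0_integralZl_EFin //; last exact: normr_ge0.
  - by move=> x _; rewrite lee_fin.
  - by apply/measurable_EFinP; exact: measurable_fun_pair1.
have mG : measurable_fun setT (fun x => (`|fine (lam' mu W1 x) - fine (lam' mu W2 x)|)%:E).
  apply/measurable_EFinP; apply: measurableT_comp; first exact: normr_measurable.
  by apply: measurable_funB; exact: fineW'_meas.
have -> : (1 + expR (-1))%:E * \int[mu]_x (`|fine (lam' mu W1 x) - fine (lam' mu W2 x)|)%:E
   = \int[mu]_x ((1 + expR (-1))%:E * (`|fine (lam' mu W1 x) - fine (lam' mu W2 x)|)%:E).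
  rewrite ge0_integralZl_EFin //.
apply: ae_ge0_le_integral => //.
- by move=> x _; apply: mule_ge0; [rewrite lee_fin /dh normr_ge0|exact: lam'_ge0].
- apply: emeasurable_funM; last exact: lam'_meas.
  exact/measurable_EFinP.
- by apply: measurable_funeM.
- apply: filterS2 (lam'_fin_ae h1) (lam'_fin_ae h2) => x f1 f2 _.
  rewrite /dh; move: f1 f2 (lam'_ge0 h1 x) (lam'_ge0 h2 x).
  case: (lam' mu W1 x) => [r1||] //; case: (lam' mu W2 x) => [r2||] //= _ _ r10 r20.
  rewrite -EFinM lee_fin; rewrite ?lee_fin in r10 r20.
  exact: key_ineq.
Qed.


Lemma bnd3 (x y z : R) : (`|x| <= 1 -> `|z| <= 1 -> `|x * y * z| <= `|y|)%R.
Proof.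
move=> hx hz; rewrite normrM (le_trans (ler_piMr _ hz)) ?normr_ge0 //.
by rewrite normrM ler_piMl.
Qed.

Lemma fin_arith (X : \bar R) : 0 <= X ->
  (1 + expR (-1))%:E * X + X + (1 + expR (-1))%:E * X <= 7%:E * X.
Proof.
have c0 : (0 < 1 + expR (-1) :> R)%R by rewrite ltr_pwDl ?expR_ge0.
(case: X => [x||] //=); last first.
  (by move=> _; rewrite mulry (gtr0_sg c0) mul1e mulry (gtr0_sg (x := 7%:R)) // mul1e).
(rewrite lee_fin => x0; rewrite -!EFinM -!EFinD lee_fin).
have e1 : (expR (-1) <= 1 :> R)%R by rewrite expR_le1 lerN10.
have : ((1 + expR (-1)) * x <= 2 * x :> R)%R by rewrite ler_wpM2r //; lra.
lra.
Qed.

Lemma main1 W1 W2 (a b : R) (f g : T -> R) : (0 <= a)%R -> (0 <= b)%R ->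
  inWclass mu W1 -> inWclass mu W2 ->
  measurable_fun setT f -> measurable_fun setT g ->
  (forall x, `|f x| <= 1)%R -> (forall y, `|g y| <= 1)%R ->
  `| \int[P]_z ((f z.1 * g z.2 * (Wab mu a b W1 z - Wab mu a b W2 z))%R)%:E |
    <= 7%:E * cutnorm mu (fun z => W1 z - W2 z)%R.
Proof.
move=> a0 b0 h1 h2 mf mg hf hg.
pose h1_ x := expfac a (lam mu W1 x). pose h2_ x := expfac a (lam mu W2 x).
pose k1 y := expfac b (lam' mu W1 y). pose k2 y := expfac b (lam' mu W2 y).
have mh1 : measurable_fun setT h1_ by apply: expfac_meas; exact: lam_meas.
have mh2 : measurable_fun setT h2_ by apply: expfac_meas; exact: lam_meas.
have mk1 : measurable_fun setT k1 by apply: expfac_meas; exact: lam'_meas.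
have mk2 : measurable_fun setT k2 by apply: expfac_meas; exact: lam'_meas.
have bh2 : forall x, (`|h2_ x| <= 1)%R by move=> x; apply: expfac_bnd a0 (lam_ge0 h2 x).
have bk1 : forall x, (`|k1 x| <= 1)%R by move=> x; apply: expfac_bnd b0 (lam'_ge0 h1 x).
have bh12 : forall x, (`|h1_ x - h2_ x| <= 1)%R.
  by move=> x; apply: expfac_bndB a0 (lam_ge0 h1 x) (lam_ge0 h2 x).
have bk12 : forall x, (`|k1 x - k2 x| <= 1)%R.
  by move=> x; apply: expfac_bndB b0 (lam'_ge0 h1 x) (lam'_ge0 h2 x).
pose mA z := (f z.1 * g z.2 * (h1_ z.1 - h2_ z.1) * k1 z.2)%R.
pose mB z := (f z.1 * h2_ z.1 * (g z.2 * k1 z.2))%R.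
pose mC z := (f z.1 * g z.2 * h2_ z.1 * (k1 z.2 - k2 z.2))%R.
have eqz : forall z, (f z.1 * g z.2 * (Wab mu a b W1 z - Wab mu a b W2 z) =
    mA z * W1 z + mB z * (W1 z - W2 z) + mC z * W2 z)%R.
  by move=> z; rewrite /Wab /mA /mB /mC /h1_ /h2_ /k1 /k2; ring.
have fg1 : forall z : T * T, (`|f z.1 * g z.2| <= 1)%R by move=> z; apply: bnd1.
have mfg : measurable_fun setT (fun z : T * T => f z.1 * g z.2)%R.
  by apply: measurable_funM; [exact: mfst|exact: msnd].
have iA : P.-integrable setT (fun z => (mA z * W1 z)%:E).
  apply: int_bdd (intW h1).
  - apply: measurable_funM; [apply: measurable_funM => //|exact: msnd].
    by apply: measurable_funB; exact: mfst.
  - by move=> z; rewrite /mA; apply: bnd1; [apply: bnd1|].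
have iB : P.-integrable setT (fun z => (mB z * (W1 z - W2 z))%:E).
  apply: int_bdd (intB h1 h2).
  - apply: measurable_funM; apply: measurable_funM.
    + exact: mfst.
    + exact: mfst.
    + exact: msnd.
    + exact: msnd.
  - by move=> z; rewrite /mB; apply: bnd1; apply: bnd1.
have iC : P.-integrable setT (fun z => (mC z * W2 z)%:E).
  apply: int_bdd (intW h2).
  - apply: measurable_funM; [apply: measurable_funM => //; exact: mfst|].
    by apply: measurable_funB; exact: msnd.
  - by move=> z; rewrite /mC; apply: bnd1; [apply: bnd1|].
have -> : \int[P]_z ((f z.1 * g z.2 * (Wab mu a b W1 z - Wab mu a b W2 z))%R)%:E =
   \int[P]_z ((mA z * W1 z)%:E + (mB z * (W1 z - W2 z))%:E + (mC z * W2 z)%:E).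
  by apply: eq_integral => z _; rewrite eqz !EFinD.
rewrite integralD //; last exact: integrableD.
rewrite integralD //.
have [W10 _] := h1; have [W20 _] := h2.
have hA : `|\int[P]_z (mA z * W1 z)%:E| <=
    (1 + expR (-1))%:E * cutnorm mu (fun z => (W1 z - W2 z)%R).
  apply: (le_trans (le_abse_integral _ measurableT (measurable_int _ iA))).
  apply: (@le_trans _ _ (\int[P]_z ((`|expfac a (lam mu W1 z.1) - expfac a (lam mu W2 z.1)| * W1 z)%R)%:E)).
    apply: ge0_le_integral => //.
    - by apply: measurableT_comp => //; exact: measurable_int iA.
    - apply/measurable_EFinP; apply: measurable_funM; last exact: inW_meas.
      apply: measurableT_comp; first exact: normr_measurable.
      by apply: measurable_funB; [exact: (mfst mh1)|exact: (mfst mh2)].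
    - move=> z _; rewrite abse_EFin lee_fin normrM (ger0_norm (W10 z)).
      by rewrite ler_wpM2r //; apply: bnd3.
  apply: le_trans (LA a0 h1 h2) _.
  by apply: lee_wpmul2l; [rewrite lee_fin addr_ge0 ?expR_ge0|exact: K1].
have hB : `|\int[P]_z (mB z * (W1 z - W2 z))%:E| <= cutnorm mu (fun z => (W1 z - W2 z)%R).
  apply: (cut_ub (u := fun x => (f x * h2_ x)%R) (v := fun y => (g y * k1 y)%R)).
  - exact: measurable_funM.
  - exact: measurable_funM.
  - by move=> x; apply: bnd1.
  - by move=> y; apply: bnd1.
have hC : `|\int[P]_z (mC z * W2 z)%:E| <=
    (1 + expR (-1))%:E * cutnorm mu (fun z => (W1 z - W2 z)%R).
  apply: (le_trans (le_abse_integral _ measurableT (measurable_int _ iC))).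
  apply: (@le_trans _ _ (\int[P]_z ((`|expfac b (lam' mu W2 z.2) - expfac b (lam' mu W1 z.2)| * W2 z)%R)%:E)).
    apply: ge0_le_integral => //.
    - by apply: measurableT_comp => //; exact: measurable_int iC.
    - apply/measurable_EFinP; apply: measurable_funM; last exact: inW_meas.
      apply: measurableT_comp; first exact: normr_measurable.
      by apply: measurable_funB; [exact: (msnd mk2)|exact: (msnd mk1)].
    - move=> z _; rewrite abse_EFin lee_fin normrM (ger0_norm (W20 z)).
      rewrite ler_wpM2r // /mC normrM -/(k1 z.2) -/(k2 z.2) distrC ler_piMl //.
      by apply: bnd1; [apply: bnd1|].
  apply: le_trans (LC b0 h2 h1) _.
  apply: lee_wpmul2l; first by rewrite lee_fin addr_ge0 ?expR_ge0.
  under eq_integral do rewrite distrC.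
  exact: K2.
have X0 : 0 <= cutnorm mu (fun z => (W1 z - W2 z)%R) := le_trans (abse_ge0 _) hB.
apply: le_trans (lee_abs_add _ _) _.
apply: le_trans (leeD (lee_abs_add _ _) (lexx _)) _.
apply: le_trans (leeD (leeD hA hB) hC) _.
exact: fin_arith.
Qed.

End Pf.

Unset Implicit Arguments.
Local Open Scope ring_scope.

Theorem mainTheorem12 (R : realType) (d : measure_display) (T : measurableType d)
  (mu : probability T R) (a b : R) (ha : 0 <= a) (hb : 0 <= b) :
  (forall W1 W2 : T * T -> R, inWclass mu W1 -> inWclass mu W2 ->
     (cutnorm mu (fun z => (Wab mu a b W1 z - Wab mu a b W2 z)%R)
       <= 7%:E * cutnorm mu (fun z => (W1 z - W2 z)%R))%E) /\
  (forall W : T * T -> R, inWclass mu W ->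
     (0 < a -> forall x, (lam mu (Wab mu a b W) x <= (expR (-1) / a)%:E)%E) /\
     (0 < b -> forall y, (lam' mu (Wab mu a b W) y <= (expR (-1) / b)%:E)%E)).
Proof.
split.
- move=> W1 W2 h1 h2.
  apply: ge_ereal_sup => e [f [g [mf mg hf hg ->]]].
  exact: main1.
- move=> W hW; split.
  + by move=> a0 x; exact: part2a.
  + by move=> b0 y; exact: part2b.
Qed.
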